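(* Let $q\ge5$, $q\not\equiv0\pmod3$. For the orbit $\mathcal O_L$ we have $P_T=V_2+1$ and $P_{1_\Gamma}=V_1$.
   Context: Let $\mathbb F_q$ be the field of order $q$ and $\mathrm{PG}(3,q)$ the projective space with points $\mathbf P(x_0,x_1,x_2,x_3)$. For $t\in\mathbb F_q$ put $P(t)=\mathbf P(t^3,t^2,t,1)$, and $P(\infty)=\mathbf P(1,0,0,0)$; the twisted cubic is $\mathcal C=\{P(t):t\in\mathbb F_q\cup\{\infty\}\}$ and $G_q$ is the group of projectivities fixing $\mathcal C$. The osculating plane at $P(t)$ is $x_0-3tx_1+3t^2x_2-t^3x_3=0$ ($t\in\mathbb F_q$) and $x_3=0$ at $P(\infty)$; these are the $\Gamma$-planes. The tangent at $P(t)$, $t\in\mathbb F_q$, is the line through $P(t)$ and $\mathbf P(3t^2,2t,1,0)$; at $P(\infty)$ it is the line through $\mathbf P(1,0,0,0),\mathbf P(0,1,0,0)$. $T$-points are points off $\mathcal C$ on a tangent; $1_\Gamma$-points are points off $\mathcal C$ lying in exactly one $\Gamma$-plane. $\ell_L$ is the line through $\mathbf P(1,0,0,1)$ and $\mathbf P(0,0,1,0)$, i.e. $\{\mathbf P(0,0,1,0)\}\cup\{\mathbf P(1,0,\beta,1):\beta\in\mathbb F_q\}$, and $\mathcal O_L$ is its $G_q$-orbit; for a point type $\mathfrak p$, $P_{\mathfrak p}$ is the number of $\mathfrak p$-points on a line of $\mathcal O_L$. For $m\in\{0,1,2,3\}$, $V_m$ is the number of $\beta\in\mathbb F_q$ such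 that $t^3-3\beta t^2-1=0$ has exactly $m$ distinct solutions $t\in\mathbb F_q$. *)

(* Defs.v *)
From HB Require Import structures.
From mathcomp Require Import all_boot all_order all_algebra all_field.
Set Implicit Arguments. Unset Strict Implicit. Unset Printing Implicit Defensive.
Import GRing.Theory.
Local Open Scope ring_scope.

Section TwistedCubic.
Variable F : finFieldType.

(* Vectors of F^4 (row vectors); a point of PG(3,q) is the class of a nonzero vector. *)
Definition vec := 'rV[F]_4.
Definition mkv (a b c d : F) : vec := \row_(i < 4) nth 0 [:: a; b; c; d] i.
Definition coord (k : nat) (v : vec) : F := v ord0 (inord k).

(* u and v represent the same projective point (v nonzero assumed where relevant) *)
Definition prop (u v : vec) : bool := [exists c : F, (c != 0) && (u == c *: v)].

(* canonical representative of a projective point: first nonzero coordinate is 1 *)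
Definition ppoint (v : vec) : bool :=
  [exists i : 'I_4, (v ord0 i == 1) && [forall j : 'I_4, (j < i)%N ==> (v ord0 j == 0)]].

Definition onspan (a b v : vec) : bool :=
  [exists x : F, exists y : F, v == x *: a + y *: b].

Definition Pt (t : F) : vec := mkv (t ^+ 3) (t ^+ 2) t 1.
Definition Pinf : vec := mkv 1 0 0 0.

Definition onC (v : vec) : bool := [exists t : F, prop v (Pt t)] || prop v Pinf.

Definition on_tangent (v : vec) : bool :=
  [exists t : F, onspan (Pt t) (mkv (3 * t ^+ 2) (2 * t) 1 0) v]
  || onspan (mkv 1 0 0 0) (mkv 0 1 0 0) v.
Definition Tpoint (v : vec) : bool := ~~ onC v && on_tangent v.

Definition in_Gamma_plane (t : F) (v : vec) : bool :=
  coord 0 v - 3 * t * coord 1 v + 3 * t ^+ 2 * coord 2 v - t ^+ 3 * coord 3 v == 0.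
Definition nGamma (v : vec) : nat :=
  #|[set t : F | in_Gamma_plane t v]| + nat_of_bool (coord 3 v == 0 :> F).
Definition OneGammaPoint (v : vec) : bool := ~~ onC v && (nGamma v == 1%N).

Definition inGq (A : 'M[F]_4) : bool :=
  (A \in unitmx) && [forall v : vec, onC v ==> onC (v *m A)].

Definition lL_a : vec := mkv 1 0 0 1.
Definition lL_b : vec := mkv 0 0 1 0.

(* number of points of type p on the line (l_L)A of the orbit O_L *)
Definition Pcount (p : pred vec) (A : 'M[F]_4) : nat :=
  #|[set v : vec | ppoint v && onspan (lL_a *m A) (lL_b *m A) v && p v]|.

Definition Vm (m : nat) : nat :=
  #|[set beta : F | #|[set t : F | t ^+ 3 - 3 * beta * t ^+ 2 - 1 == 0]| == m]|.

End TwistedCubic.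

(* Main.v *)
From HB Require Import structures.
Require Import Defs.
From mathcomp Require Import all_boot all_order all_algebra all_field.
From mathcomp Require Import all_fingroup all_solvable ring zify.
Set Implicit Arguments. Unset Strict Implicit. Unset Printing Implicit Defensive.
Import GRing.Theory FinRing.Theory.
Local Open Scope ring_scope.

Section S.
Variable F : finFieldType.
Implicit Types (a b c d k s t x y : F) (v w : vec F).

Lemma three_neq0 : (#|F| %% 3 != 0)%N -> (3 : F) != 0.
Proof.
move=> h; apply/negP => /eqP h3.
have p3 : (3%N \in [pchar F]) by rewrite inE /= h3 eqxx.
have : (#|F|%:R : F) = 0.
  by have := expg_cardG (in_setT (1:F)); rewrite cardsT zmodXgE.
move/eqP; rewrite -(dvdn_pcharf p3) => /dvdnP [k hk].
by move: h; rewrite hk modnMl.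
Qed.

Lemma coord_mkv a b c d :
  [/\ Defs.coord 0 (mkv a b c d) = a, Defs.coord 1 (mkv a b c d) = b,
      Defs.coord 2 (mkv a b c d) = c & Defs.coord 3 (mkv a b c d) = d].
Proof. by rewrite /Defs.coord /mkv !mxE !inordK. Qed.

Lemma mkvE v : v = mkv (Defs.coord 0 v) (Defs.coord 1 v) (Defs.coord 2 v) (Defs.coord 3 v).
Proof.
apply/matrixP => i j; rewrite !mxE /Defs.coord (ord1 i).
by case: j => [[|[|[|[|j]]]] Hj] //=; congr (v _ _); apply: val_inj; rewrite /= inordK.
Qed.

Lemma mkv_inj a b c d a' b' c' d' :
  mkv a b c d = mkv a' b' c' d' -> [/\ a = a', b = b', c = c' & d = d'].
Proof.
move=> h; have := coord_mkv a b c d; have := coord_mkv a' b' c' d'.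
by rewrite h => -[-> -> -> ->] [-> -> -> ->].
Qed.

Lemma scale_mkv k a b c d : k *: mkv a b c d = mkv (k*a) (k*b) (k*c) (k*d).
Proof.
by apply/matrixP => i j; rewrite !mxE; case: j => [[|[|[|[|j]]]] Hj] //=; rewrite mulr0.
Qed.

Lemma add_mkv a b c d a' b' c' d' :
  mkv a b c d + mkv a' b' c' d' = mkv (a+a') (b+b') (c+c') (d+d').
Proof.
by apply/matrixP => i j; rewrite !mxE; case: j => [[|[|[|[|j]]]] Hj] //=; rewrite addr0.
Qed.

Definition ent (A : 'M[F]_4) (i j : nat) := A (inord i) (inord j).

Lemma mul_mkv a b c d (A : 'M[F]_4) :
  mkv a b c d *m A = mkv (a * ent A 0 0 + b * ent A 1 0 + c * ent A 2 0 + d * ent A 3 0)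
                         (a * ent A 0 1 + b * ent A 1 1 + c * ent A 2 1 + d * ent A 3 1)
                         (a * ent A 0 2 + b * ent A 1 2 + c * ent A 2 2 + d * ent A 3 2)
                         (a * ent A 0 3 + b * ent A 1 3 + c * ent A 2 3 + d * ent A 3 3).
Proof.
apply/matrixP => i j; rewrite !mxE !big_ord_recr big_ord0 /= add0r !mxE /ent.
have e : forall (k : nat) (H : (k < 4)%N), (Ordinal H) = inord k.
  by move=> k H; apply: val_inj; rewrite /= inordK.
case: j => [[|[|[|[|j]]]] Hj] //=;
by congr (_ + _ + _ + _); congr (_ * _); congr (A _ _); apply: val_inj; rewrite /= ?inordK.
Qed.

Definition mx4 (l : seq (seq F)) : 'M[F]_4 := \matrix_(i < 4, j < 4) nth 0 (nth [::] l i) j.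
Lemma ent_mx4 l i j : (i < 4)%N -> (j < 4)%N -> ent (mx4 l) i j = nth 0 (nth [::] l i) j.
Proof. by move=> hi hj; rewrite /ent mxE !inordK. Qed.

Definition Ub b : 'M[F]_4 := mx4 [:: [:: 1; 0; 0; 0]; [:: 3 * b; 1; 0; 0];
   [:: 3 * b ^+ 2; 2 * b; 1; 0]; [:: b ^+ 3; b ^+ 2; b; 1]].
Definition Dk k : 'M[F]_4 := mx4 [:: [:: 1; 0; 0; 0]; [:: 0; k; 0; 0];
   [:: 0; 0; k ^+ 2; 0]; [:: 0; 0; 0; k ^+ 3]].
Definition Jm : 'M[F]_4 := mx4 [:: [:: 0; 0; 0; 1]; [:: 0; 0; 1; 0];
   [:: 0; 1; 0; 0]; [:: 1; 0; 0; 0]].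

Lemma mul_Ub a b c d k : mkv a b c d *m Ub k =
  mkv (a + 3 * k * b + 3 * k^+2 * c + k^+3 * d) (b + 2 * k * c + k^+2 * d) (c + k * d) d.
Proof. rewrite mul_mkv !ent_mx4 //=; congr mkv; ring. Qed.
Lemma mul_Dk a b c d k : mkv a b c d *m Dk k = mkv a (k * b) (k^+2 * c) (k^+3 * d).
Proof. rewrite mul_mkv !ent_mx4 //=; congr mkv; ring. Qed.
Lemma mul_Jm a b c d : mkv a b c d *m Jm = mkv d c b a.
Proof. rewrite mul_mkv !ent_mx4 //=; congr mkv; ring. Qed.

Lemma mx_ext (A B : 'M[F]_4) : (forall v : vec F, v *m A = v *m B) -> A = B.
Proof.
move=> h; apply/row_matrixP => i; rewrite !rowE; exact: h.
Qed.

Lemma Ub_inv b : Ub b *m Ub (- b) = 1%:M.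
Proof.
apply: mx_ext => v; rewrite mulmxA mulmx1 [v]mkvE !mul_Ub; congr mkv; ring.
Qed.
Lemma Dk_inv k : k != 0 -> Dk k *m Dk k^-1 = 1%:M.
Proof.
move=> hk; apply: mx_ext => v; rewrite mulmxA mulmx1 [v]mkvE !mul_Dk; congr mkv.
all: by field.
Qed.
Lemma Jm_inv : Jm *m Jm = 1%:M.
Proof. by apply: mx_ext => v; rewrite mulmxA mulmx1 [v]mkvE !mul_Jm. Qed.


Definition Dt t : vec F := mkv (3 * t ^+ 2) (2 * t) 1 0.
Definition e0 : vec F := mkv 1 0 0 0.
Definition e1 : vec F := mkv 0 1 0 0.

Lemma onC_elim v : onC v ->
  (exists t c, c != 0 /\ v = c *: Pt t) \/ (exists c, c != 0 /\ v = c *: Pinf F).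
Proof.
case/orP => [/existsP [t /existsP [c /andP [hc /eqP ->]]]|/existsP [c /andP [hc /eqP ->]]].
  by left; exists t, c.
by right; exists c.
Qed.

Lemma onC_Pt t c : c != 0 -> onC (c *: Pt t).
Proof. by move=> hc; apply/orP; left; apply/existsP; exists t; apply/existsP; exists c; rewrite hc eqxx. Qed.
Lemma onC_Pinf c : c != 0 -> onC (c *: Pinf F).
Proof. by move=> hc; apply/orP; right; apply/existsP; exists c; rewrite hc eqxx. Qed.

Lemma tan_elim v : on_tangent v ->
  (exists t x y, v = x *: Pt t + y *: Dt t) \/ (exists x y, v = x *: e0 + y *: e1).
Proof.
case/orP => [/existsP [t /existsP [x /existsP [y /eqP ->]]]|/existsP [x /existsP [y /eqP ->]]].
  by left; exists t, x, y.
by right; exists x, y.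
Qed.

Lemma tan_intro1 t x y v : v = x *: Pt t + y *: Dt t -> on_tangent v.
Proof. by move=> ->; apply/orP; left; apply/existsP; exists t; apply/existsP; exists x; apply/existsP; exists y. Qed.
Lemma tan_intro2 x y v : v = x *: e0 + y *: e1 -> on_tangent v.
Proof. by move=> ->; apply/orP; right; apply/existsP; exists x; apply/existsP; exists y. Qed.

Lemma onC_scale c v : c != 0 -> onC (c *: v) = onC v.
Proof.
have H : forall c v, c != 0 -> onC v -> onC (c *: v).
  move=> c' v' hc' /onC_elim [[t [d [hd ->]]]|[d [hd ->]]]; rewrite scalerA.
    by apply: onC_Pt; rewrite mulf_neq0.
  by apply: onC_Pinf; rewrite mulf_neq0.
move=> hc; apply/idP/idP; last exact: H.
by move=> /(H c^-1); rewrite scalerA mulVf // scale1r; apply; rewrite invr_eq0.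
Qed.

Lemma tan_scale c v : c != 0 -> on_tangent (c *: v) = on_tangent v.
Proof.
have H : forall c v, on_tangent v -> on_tangent (c *: v).
  move=> c' v' /tan_elim [[t [x [y ->]]]|[x [y ->]]].
    by apply: (@tan_intro1 t (c' * x) (c' * y)); rewrite scalerDr !scalerA.
  by apply: (@tan_intro2 (c' * x) (c' * y)); rewrite scalerDr !scalerA.
move=> hc; apply/idP/idP; last exact: H.
by move=> /(H c^-1); rewrite scalerA mulVf // scale1r.
Qed.

Definition gam t v := Defs.coord 0 v - 3 * t * Defs.coord 1 v + 3 * t ^+ 2 * Defs.coord 2 v
   - t ^+ 3 * Defs.coord 3 v.

Lemma coordZ (k : nat) c v : Defs.coord k (c *: v) = c * Defs.coord k v.
Proof. by rewrite /Defs.coord mxE. Qed.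

Lemma nGamma_scale c v : c != 0 -> nGamma (c *: v) = nGamma v.
Proof.
move=> hc; rewrite /nGamma coordZ mulf_eq0 (negbTE hc) /=; congr (_ + _)%N.
apply: eq_card => t; rewrite !inE /in_Gamma_plane !coordZ.
have -> : c * Defs.coord 0 v - 3 * t * (c * Defs.coord 1 v) + 3 * t ^+ 2 * (c * Defs.coord 2 v) -
  t ^+ 3 * (c * Defs.coord 3 v) = c * gam t v by rewrite /gam; ring.
by rewrite mulf_eq0 (negbTE hc).
Qed.


Definition Good (A : 'M[F]_4) := forall v : vec F,
  [/\ onC (v *m A) = onC v, on_tangent (v *m A) = on_tangent v & nGamma (v *m A) = nGamma v].

Lemma eq_from_fwd (P : vec F -> bool) G G' : G *m G' = 1%:M ->
  (forall v, P v -> P (v *m G)) -> (forall v, P v -> P (v *m G')) -> forall v, P (v *m G) = P v.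
Proof.
move=> hG h1 h2 v; apply/idP/idP; last exact: h1.
by move=> /h2; rewrite -mulmxA hG mulmx1.
Qed.

Lemma lin2 (a b : vec F) x y (G : 'M[F]_4) :
  (x *: a + y *: b) *m G = x *: (a *m G) + y *: (b *m G).
Proof. by rewrite mulmxDl -!scalemxAl. Qed.

Ltac mk := rewrite /Pt /Pinf /Dt /e0 /e1 ?scale_mkv ?add_mkv; congr mkv.

Lemma onC_Ub b v : onC v -> onC (v *m Ub b).
Proof.
case/onC_elim => [[t [c [hc ->]]]|[c [hc ->]]]; rewrite -scalemxAl.
  have -> : Pt t *m Ub b = Pt (t + b) by rewrite /Pt mul_Ub; congr mkv; ring.
  exact: onC_Pt.
have -> : Pinf F *m Ub b = Pinf F by rewrite /Pinf mul_Ub; congr mkv; ring.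
exact: onC_Pinf.
Qed.

Lemma tan_Ub b v : on_tangent v -> on_tangent (v *m Ub b).
Proof.
case/tan_elim => [[t [x [y ->]]]|[x [y ->]]]; rewrite lin2.
  apply: (@tan_intro1 (t + b) x y); rewrite /Pt /Dt !mul_Ub; mk; ring.
apply: (@tan_intro2 (x + 3 * b * y) y); rewrite /e0 /e1 !mul_Ub; mk; ring.
Qed.

Lemma gam_mkv s a b c d : gam s (mkv a b c d) = a - 3 * s * b + 3 * s ^+ 2 * c - s ^+ 3 * d.
Proof. by rewrite /gam; case: (coord_mkv a b c d) => -> -> -> ->. Qed.

Lemma c3_mkv a b c d : Defs.coord 3 (mkv a b c d) = d.
Proof. by case: (coord_mkv a b c d). Qed.

Lemma nGamma_E v : nGamma v = (#|[set t | gam t v == 0%R]| + (Defs.coord 3 v == 0%R))%N.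
Proof. by []. Qed.

Lemma gam_Ub s b v : gam (s + b) (v *m Ub b) = gam s v.
Proof. rewrite [v]mkvE mul_Ub !gam_mkv; ring. Qed.

Lemma nGamma_Ub b v : nGamma (v *m Ub b) = nGamma v.
Proof.
rewrite !nGamma_E; congr (_ + _)%N; last by rewrite {1}[v]mkvE mul_Ub c3_mkv.
rewrite -(card_preimset _ (addIr b)); apply: eq_card => s.
by rewrite !inE gam_Ub.
Qed.

Lemma Good_Ub b : Good (Ub b).
Proof.
move=> v; split; last exact: nGamma_Ub.
  by apply: (eq_from_fwd (Ub_inv b)) => w; [apply: onC_Ub| apply: onC_Ub].
by apply: (eq_from_fwd (Ub_inv b)) => w; [apply: tan_Ub| apply: tan_Ub].
Qed.


Lemma onC_Dk k v : k != 0 -> onC v -> onC (v *m Dk k).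
Proof.
move=> hk; case/onC_elim => [[t [c [hc ->]]]|[c [hc ->]]]; rewrite -scalemxAl.
  have -> : Pt t *m Dk k = k ^+ 3 *: Pt (t / k) by rewrite /Pt mul_Dk; mk; try field; done.
  by rewrite scalerA; apply: onC_Pt; rewrite mulf_neq0 // expf_neq0.
have -> : Pinf F *m Dk k = Pinf F by rewrite /Pinf mul_Dk; congr mkv; ring.
exact: onC_Pinf.
Qed.

Lemma tan_Dk k v : k != 0 -> on_tangent v -> on_tangent (v *m Dk k).
Proof.
move=> hk; case/tan_elim => [[t [x [y ->]]]|[x [y ->]]]; rewrite lin2.
  apply: (@tan_intro1 (t / k) (x * k ^+ 3) (y * k ^+ 2)); rewrite /Pt /Dt !mul_Dk; mk; try field; done.
apply: (@tan_intro2 x (k * y)); rewrite /e0 /e1 !mul_Dk; mk; ring.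
Qed.

Lemma gam_Dk s k v : k != 0 -> gam (s / k) (v *m Dk k) = gam s v.
Proof. move=> hk; rewrite [v]mkvE mul_Dk !gam_mkv; by field. Qed.

Lemma nGamma_Dk k v : k != 0 -> nGamma (v *m Dk k) = nGamma v.
Proof.
move=> hk; rewrite !nGamma_E; congr (_ + _)%N; last first.
  by rewrite {1}[v]mkvE mul_Dk c3_mkv mulf_eq0 expf_eq0 (negbTE hk).
rewrite -(card_preimset _ (mulIf (invr_neq0 hk))); apply: eq_card => s.
by rewrite !inE gam_Dk.
Qed.

Lemma Good_Dk k : k != 0 -> Good (Dk k).
Proof.
move=> hk v; split; last exact: nGamma_Dk.
  apply: (eq_from_fwd (Dk_inv hk)) => w; [exact: onC_Dk| apply: onC_Dk; by rewrite invr_neq0].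
apply: (eq_from_fwd (Dk_inv hk)) => w; [exact: tan_Dk| apply: tan_Dk; by rewrite invr_neq0].
Qed.

Lemma Pt_Jm t : t != 0 -> Pt t *m Jm = t ^+ 3 *: Pt t^-1.
Proof. by move=> ht; rewrite /Pt mul_Jm; mk; try field; done. Qed.
Lemma Pt0_Jm : Pt 0 *m Jm = Pinf F.
Proof. by rewrite /Pt mul_Jm; mk; ring. Qed.
Lemma Pinf_Jm : Pinf F *m Jm = Pt 0.
Proof. by rewrite /Pt /Pinf mul_Jm; mk; ring. Qed.

Lemma onC_Jm v : onC v -> onC (v *m Jm).
Proof.
case/onC_elim => [[t [c [hc ->]]]|[c [hc ->]]]; rewrite -scalemxAl.
  have [->|ht] := eqVneq t 0; first by rewrite Pt0_Jm; apply: onC_Pinf.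
  by rewrite Pt_Jm // scalerA; apply: onC_Pt; rewrite mulf_neq0 // expf_neq0.
by rewrite Pinf_Jm; apply: onC_Pt.
Qed.

Lemma tan_Jm v : on_tangent v -> on_tangent (v *m Jm).
Proof.
case/tan_elim => [[t [x [y ->]]]|[x [y ->]]]; rewrite lin2.
  have [->|ht] := eqVneq t 0.
    apply: (@tan_intro2 x y); rewrite /Pt /Dt /e0 /e1 !mul_Jm; mk; ring.
  apply: (@tan_intro1 t^-1 (x * t ^+ 3 + 3 * y * t ^+ 2) (- (y * t))).
  rewrite /Pt /Dt !mul_Jm; mk; try field; done.
apply: (@tan_intro1 0 x y); rewrite /Pt /Dt /e0 /e1 !mul_Jm; mk; ring.
Qed.

Lemma gam_Jm s v : s != 0 -> gam s (v *m Jm) = - s ^+ 3 * gam s^-1 v.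
Proof. move=> hs; rewrite [v]mkvE mul_Jm !gam_mkv; by field. Qed.

Lemma nGamma_Jm v : nGamma (v *m Jm) = nGamma v.
Proof.
rewrite !nGamma_E.
rewrite (cardsD1 0 [set t | gam t (v *m Jm) == 0]) (cardsD1 0 [set t | gam t v == 0]) !inE.
have -> : gam 0 (v *m Jm) = Defs.coord 3 v.
  by rewrite {1}[v]mkvE mul_Jm gam_mkv; ring.
have -> : gam 0 v = Defs.coord 0 v by rewrite /gam; ring.
have -> : Defs.coord 3 (v *m Jm) = Defs.coord 0 v by rewrite {1}[v]mkvE mul_Jm c3_mkv.
have -> : #|[set t | gam t (v *m Jm) == 0] :\ 0| = #|[set t | gam t v == 0] :\ 0|.
  rewrite -(card_preimset _ (@invr_inj F)); apply: eq_card => s; rewrite !inE.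
  have [->|hs] := eqVneq s 0; first by rewrite invr0 eqxx.
  rewrite invr_eq0 hs /= gam_Jm ?invr_eq0 // invrK mulf_eq0 oppr_eq0 expf_eq0 invr_eq0 (negbTE hs) andbF /=.
  done.
by rewrite addnAC [RHS]addnAC; congr (_ + _)%N; rewrite addnC.
Qed.

Lemma Good_Jm : Good Jm.
Proof.
move=> v; split; last exact: nGamma_Jm.
  by apply: (eq_from_fwd Jm_inv) => w; apply: onC_Jm.
by apply: (eq_from_fwd Jm_inv) => w; apply: tan_Jm.
Qed.

Lemma Good_mul A B : Good A -> Good B -> Good (A *m B).
Proof.
move=> hA hB v; rewrite mulmxA; case: (hA v) => h1 h2 h3; case: (hB (v *m A)) => g1 g2 g3.
by split; [rewrite g1 h1|rewrite g2 h2|rewrite g3 h3].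
Qed.

Lemma Good_scale c A : c != 0 -> Good A -> Good (c *: A).
Proof.
move=> hc hA v; rewrite -scalemxAr; case: (hA v) => h1 h2 h3.
by rewrite onC_scale // tan_scale // nGamma_scale.
Qed.


Lemma cubic_zero c0 c1 c2 c3 : (5 <= #|F|)%N ->
  (forall t, t != 0 -> c0 + c1 * t + c2 * t ^+ 2 + c3 * t ^+ 3 = 0) ->
  [/\ c0 = 0, c1 = 0, c2 = 0 & c3 = 0].
Proof.
move=> hF h; pose p : {poly F} := Poly [:: c0; c1; c2; c3].
have hp : p = 0.
  apply: (@roots_geq_poly_eq0 _ p (enum (predC1 0))).
  - apply/allP => t; rewrite mem_enum inE => ht; rewrite /root horner_Poly /=.
    apply/eqP; rewrite /=; transitivity (c0 + c1 * t + c2 * t ^+ 2 + c3 * t ^+ 3); [ring | exact: h].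
  - exact: enum_uniq.
  - rewrite -cardE cardC1; apply: leq_trans (size_Poly _) _.
    by rewrite /=; move: hF; case: #|F| => [|[|[|[|[|n]]]]].
have := coef_Poly [:: c0; c1; c2; c3]; rewrite -/p hp => hc.
by split; [have := hc 0%N | have := hc 1%N | have := hc 2%N | have := hc 3%N];
  rewrite coef0 /= => ->.
Qed.

Lemma onC_quad w : onC w ->
  Defs.coord 0 w * Defs.coord 2 w = Defs.coord 1 w ^+ 2 /\
  Defs.coord 1 w * Defs.coord 3 w = Defs.coord 2 w ^+ 2.
Proof.
case/onC_elim => [[t [c [hc ->]]]|[c [hc ->]]]; rewrite !coordZ.
  by rewrite /Pt; case: (coord_mkv (t ^+ 3) (t ^+ 2) t 1) => -> -> -> ->; split; ring.
by rewrite /Pinf; case: (coord_mkv 1 0 0 0) => -> -> -> ->; split; ring.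
Qed.


Lemma c0_mkv a b c d : Defs.coord 0 (mkv a b c d) = a. Proof. by case: (coord_mkv a b c d). Qed.
Lemma c1_mkv a b c d : Defs.coord 1 (mkv a b c d) = b. Proof. by case: (coord_mkv a b c d). Qed.
Lemma c2_mkv a b c d : Defs.coord 2 (mkv a b c d) = c. Proof. by case: (coord_mkv a b c d). Qed.

Lemma mkv0 : mkv 0 0 0 0 = 0 :> vec F.
Proof. by apply/matrixP => i j; rewrite !mxE; case: j => [[|[|[|[|j]]]] Hj]. Qed.

Lemma unit_ker (A : 'M[F]_4) v : A \in unitmx -> v *m A = 0 -> v = 0.
Proof. by move=> hU h; rewrite -(mulmxK hU v) h mul0mx. Qed.

Lemma classify (A : 'M[F]_4) : (5 <= #|F|)%N -> A \in unitmx ->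
  (forall v, onC v -> onC (v *m A)) ->
  (exists2 al, al != 0 & Pinf F *m A = al *: Pinf F) ->
  (exists2 de, de != 0 & Pt 0 *m A = de *: Pt 0) -> Good A.
Proof.
move=> hF hU hC [al hal h0] [de hde h3].
move: h0; rewrite /Pinf mul_mkv scale_mkv => /mkv_inj [].
rewrite !mul1r !mul0r !addr0 !mulr1 !mulr0 => a00 a01 a02 a03.
move: h3; rewrite /Pt mul_mkv scale_mkv => /mkv_inj [].
rewrite !expr0n /= !mul1r !mul0r !add0r !mulr1 !mulr0 => a30 a31 a32 a33.
have hq : forall t, t != 0 -> let w := Pt t *m A in
   Defs.coord 0 w * Defs.coord 2 w - Defs.coord 1 w ^+ 2 = 0 /\
   Defs.coord 1 w * Defs.coord 3 w - Defs.coord 2 w ^+ 2 = 0.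
  move=> t _ w; have := onC_quad (hC _ (onC_Pt t (oner_neq0 F))).
  by rewrite scale1r => -[-> ->]; rewrite !subrr.
have p1 : forall t, t != 0 ->
     (ent A 2 0 * ent A 2 2 - ent A 2 1 ^+ 2) + (ent A 1 0 * ent A 2 2 + ent A 2 0 * ent A 1 2 - 2 * ent A 1 1 * ent A 2 1) * t
     + (al * ent A 2 2 + ent A 1 0 * ent A 1 2 - ent A 1 1 ^+ 2) * t ^+ 2 + (al * ent A 1 2) * t ^+ 3 = 0.
  move=> t ht; have [q1 _] := hq t ht; move: q1.
  rewrite /Pt mul_mkv ?c0_mkv ?c1_mkv ?c2_mkv ?c3_mkv ?a00 ?a01 ?a02 ?a03 ?a30 ?a31 ?a32 ?a33 => q1.
  have : t ^+ 2 * ((ent A 2 0 * ent A 2 2 - ent A 2 1 ^+ 2) + (ent A 1 0 * ent A 2 2 + ent A 2 0 * ent A 1 2 - 2 * ent A 1 1 * ent A 2 1) * t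
     + (al * ent A 2 2 + ent A 1 0 * ent A 1 2 - ent A 1 1 ^+ 2) * t ^+ 2 + (al * ent A 1 2) * t ^+ 3) = 0.
    by rewrite -q1; ring.
  by move/eqP; rewrite mulf_eq0 expf_eq0 (negbTE ht) andbF /= => /eqP.
have p2 : forall t, t != 0 ->
     (ent A 2 1 * de) + (ent A 1 1 * de + ent A 2 1 * ent A 2 3 - ent A 2 2 ^+ 2) * t
     + (ent A 1 1 * ent A 2 3 + ent A 2 1 * ent A 1 3 - 2 * ent A 1 2 * ent A 2 2) * t ^+ 2
     + (ent A 1 1 * ent A 1 3 - ent A 1 2 ^+ 2) * t ^+ 3 = 0.
  move=> t ht; have [_ q2] := hq t ht; move: q2.
  rewrite /Pt mul_mkv ?c0_mkv ?c1_mkv ?c2_mkv ?c3_mkv ?a00 ?a01 ?a02 ?a03 ?a30 ?a31 ?a32 ?a33 => q2.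
  have : t * ((ent A 2 1 * de) + (ent A 1 1 * de + ent A 2 1 * ent A 2 3 - ent A 2 2 ^+ 2) * t
     + (ent A 1 1 * ent A 2 3 + ent A 2 1 * ent A 1 3 - 2 * ent A 1 2 * ent A 2 2) * t ^+ 2
     + (ent A 1 1 * ent A 1 3 - ent A 1 2 ^+ 2) * t ^+ 3) = 0.
    by rewrite -q2; ring.
  by move/eqP; rewrite mulf_eq0 (negbTE ht) /= => /eqP.
have [k0 k1 k2 k3] := cubic_zero hF p1.
have [d0 d1 d2 d3] := cubic_zero hF p2.
have x2 : ent A 1 2 = 0 by move/eqP: k3; rewrite mulf_eq0 (negbTE hal) => /eqP.
have y1 : ent A 2 1 = 0 by move/eqP: d0; rewrite mulf_eq0 (negbTE hde) orbF => /eqP.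
have e2 : al * ent A 2 2 = ent A 1 1 ^+ 2.
  by apply/eqP; rewrite -subr_eq0 -k2 x2; apply/eqP; ring.
have e1 : ent A 1 0 * ent A 2 2 = 0 by rewrite -k1 x2 y1; ring.
have e0 : ent A 2 0 * ent A 2 2 = 0 by rewrite -k0 y1; ring.
have f3 : ent A 1 1 * ent A 1 3 = 0 by rewrite -d3 x2; ring.
have f2 : ent A 1 1 * ent A 2 3 = 0 by rewrite -d2 x2 y1; ring.
have f1 : ent A 1 1 * de = ent A 2 2 ^+ 2.
  by apply/eqP; rewrite -subr_eq0 -d1 y1; apply/eqP; ring.
have hx1 : ent A 1 1 != 0.
  apply/negP => /eqP hx.
  have hy : ent A 2 2 = 0 by move: e2; rewrite hx expr0n /= => /eqP; rewrite mulf_eq0 (negbTE hal) => /eqP.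
  have := @unit_ker A (mkv (- ent A 1 0 / al) 1 0 (- ent A 1 3 / de)) hU.
  rewrite mul_mkv a00 a01 a02 a03 a30 a31 a32 a33 hx x2 y1 hy.
  have -> : mkv (- ent A 1 0 / al * al + 1 * ent A 1 0 + 0 * ent A 2 0 + - ent A 1 3 / de * 0)
    (- ent A 1 0 / al * 0 + 1 * 0 + 0 * 0 + - ent A 1 3 / de * 0)
    (- ent A 1 0 / al * 0 + 1 * 0 + 0 * 0 + - ent A 1 3 / de * 0)
    (- ent A 1 0 / al * 0 + 1 * ent A 1 3 + 0 * ent A 2 3 + - ent A 1 3 / de * de) = mkv 0 0 0 0.
    by congr mkv; field; rewrite ?hal ?hde.
  move=> /(_ mkv0); rewrite -mkv0 => /mkv_inj [_ h _ _]; by move/eqP: h; rewrite oner_eq0.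
have x3 : ent A 1 3 = 0 by move/eqP: f3; rewrite mulf_eq0 (negbTE hx1) => /eqP.
have y3 : ent A 2 3 = 0 by move/eqP: f2; rewrite mulf_eq0 (negbTE hx1) => /eqP.
have y2E : ent A 2 2 = ent A 1 1 ^+ 2 / al.
  by apply: (mulfI hal); rewrite e2; field.
have hy2 : ent A 2 2 != 0 by rewrite y2E mulf_neq0 ?invr_eq0 // expf_neq0.
have x0 : ent A 1 0 = 0 by move/eqP: e1; rewrite mulf_eq0 (negbTE hy2) orbF => /eqP.
have y0 : ent A 2 0 = 0 by move/eqP: e0; rewrite mulf_eq0 (negbTE hy2) orbF => /eqP.
have deE : de = ent A 1 1 ^+ 3 / al ^+ 2.
  by apply: (mulfI hx1); rewrite f1 y2E; field.
have -> : A = al *: Dk (ent A 1 1 / al).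
  apply: mx_ext => v; rewrite [v]mkvE -scalemxAr mul_Dk mul_mkv scale_mkv.
  rewrite a00 a01 a02 a03 a30 a31 a32 a33 x0 x2 x3 y0 y1 y3 y2E deE.
  by congr mkv; field.
apply: Good_scale => //; apply: Good_Dk; by rewrite mulf_neq0 ?invr_eq0.
Qed.


Lemma Pt_Ub t b : Pt t *m Ub b = Pt (t + b).
Proof. by rewrite /Pt mul_Ub; congr mkv; ring. Qed.
Lemma Pinf_Ub b : Pinf F *m Ub b = Pinf F.
Proof. by rewrite /Pinf mul_Ub; congr mkv; ring. Qed.

Lemma unit_Ub b : Ub b \in unitmx.
Proof. by case: (mulmx1_unit (Ub_inv b)). Qed.
Lemma unit_Jm : Jm \in unitmx.
Proof. by case: (mulmx1_unit Jm_inv). Qed.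

Lemma Good_cancel A W : Good (A *m W) -> Good W -> Good A.
Proof.
move=> hAW hW v; case: (hAW v) => h1 h2 h3; case: (hW (v *m A)) => g1 g2 g3.
by rewrite -mulmxA in g1 g2 g3; split; [rewrite -g1 h1|rewrite -g2 h2|rewrite -g3 h3].
Qed.

Lemma not_same A X c1 c2 : A \in unitmx -> c1 != 0 ->
  Pinf F *m A = c1 *: X -> Pt 0 *m A = c2 *: X -> False.
Proof.
move=> hU hc h1 h2.
have := @unit_ker A (c2 *: Pinf F - c1 *: Pt 0) hU.
rewrite mulmxBl -!scalemxAl h1 h2 !scalerA mulrC subrr => /(_ erefl) /eqP.
rewrite /Pinf /Pt !scale_mkv -mkv0 -scaleN1r scale_mkv add_mkv => /eqP /mkv_inj [_ _ _].
move=> /eqP; rewrite mulr0 mulr1 add0r mulN1r oppr_eq0 => /eqP h.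
by move: hc; rewrite h eqxx.
Qed.

Lemma inGq_Good A : (5 <= #|F|)%N -> inGq A -> Good A.
Proof.
move=> hF /andP [hU /forallP hC'].
have hC : forall v, onC v -> onC (v *m A) by move=> v; apply/implyP/hC'.
have hI := hC _ (onC_Pinf (oner_neq0 F)); rewrite scale1r in hI.
have h0 := hC _ (onC_Pt 0 (oner_neq0 F)); rewrite scale1r in h0.
have key : forall W, W \in unitmx -> Good W ->
    (exists2 al, al != 0 & Pinf F *m (A *m W) = al *: Pinf F) ->
    (exists2 de, de != 0 & Pt 0 *m (A *m W) = de *: Pt 0) -> Good A.
  move=> W hWU hW h1 h2; apply: (Good_cancel _ hW); apply: classify => //.
    by rewrite unitmx_mul hU.
  by move=> v /hC; rewrite mulmxA; case: (hW (v *m A)) => -> _ _.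
case/onC_elim: hI => [[u [c1 [hc1 e1]]]|[c1 [hc1 e1]]];
case/onC_elim: h0 => [[w [c2 [hc2 e2]]]|[c2 [hc2 e2]]].
- have [euw|nuw] := eqVneq u w.
    by exfalso; apply: (not_same hU hc1 e1); rewrite e2 euw.
  have hwu : w - u != 0 by rewrite subr_eq0 eq_sym.
  apply: (key (Ub (- u) *m Jm *m Ub (- (w - u)^-1))).
  - by rewrite !unitmx_mul !unit_Ub unit_Jm.
  - by apply: Good_mul; [apply: Good_mul|]; [apply: Good_Ub|apply: Good_Jm|apply: Good_Ub].
  - by exists c1 => //; rewrite !mulmxA e1 -!scalemxAl Pt_Ub addrN Pt0_Jm Pinf_Ub.
  - apply: (@ex_intro2 _ _ _ (c2 * (w - u) ^+ 3)); first by apply: mulf_neq0 => //; apply: expf_neq0.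
    rewrite !mulmxA e2 -!scalemxAl Pt_Ub Pt_Jm // -!scalemxAl Pt_Ub addrN scalerA.
    by [].
- apply: (key (Ub (- u) *m Jm)).
  - by rewrite !unitmx_mul unit_Ub unit_Jm.
  - by apply: Good_mul; [apply: Good_Ub|apply: Good_Jm].
  - by exists c1 => //; rewrite !mulmxA e1 -!scalemxAl Pt_Ub addrN Pt0_Jm.
  - by exists c2 => //; rewrite !mulmxA e2 -!scalemxAl Pinf_Ub Pinf_Jm.
- apply: (key (Ub (- w))).
  - by rewrite unit_Ub.
  - exact: Good_Ub.
  - by exists c1 => //; rewrite !mulmxA e1 -!scalemxAl Pinf_Ub.
  - by exists c2 => //; rewrite !mulmxA e2 -!scalemxAl Pt_Ub addrN.
- by exfalso; apply: (not_same hU hc1 e1 e2).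
Qed.


Lemma ord4_cases (i : 'I_4) :
  [\/ i = inord 0, i = inord 1, i = inord 2 | i = inord 3].
Proof.
case: i => [[|[|[|[|i]]]] Hi] //; [constructor 1|constructor 2|constructor 3|constructor 4];
  by apply: val_inj; rewrite /= inordK.
Qed.

Lemma ex4 (P : pred 'I_4) :
  [exists i, P i] = [|| P (inord 0), P (inord 1), P (inord 2) | P (inord 3)].
Proof.
apply/existsP/idP => [[i hi]|].
  by case: (ord4_cases i) => e; rewrite -e hi ?orbT.
by case/or4P => h; eexists; exact: h.
Qed.

Lemma all4 (P : pred 'I_4) :
  [forall i, P i] = [&& P (inord 0), P (inord 1), P (inord 2) & P (inord 3)].
Proof.
apply/forallP/and4P => [h|[h0 h1 h2 h3] i]; first by split; apply: h.
by case: (ord4_cases i) => ->.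
Qed.

Definition lead v : F :=
  if Defs.coord 0 v != 0 then Defs.coord 0 v else
  if Defs.coord 1 v != 0 then Defs.coord 1 v else
  if Defs.coord 2 v != 0 then Defs.coord 2 v else Defs.coord 3 v.

Lemma ppointE v : ppoint v = (lead v == 1).
Proof.
have h01 : (0 == 1 :> F) = false by rewrite eq_sym oner_eq0.
rewrite /ppoint ex4 !all4 !inordK //=.
rewrite -![v ord0 (inord _)]/(Defs.coord _ v) /lead.
case: (Defs.coord 0 v =P 0) => h0; rewrite ?h0 ?eqxx /=.
  case: (Defs.coord 1 v =P 0) => h1; rewrite ?h1 ?eqxx /=.
    case: (Defs.coord 2 v =P 0) => h2; rewrite ?h2 ?eqxx /= ?h01 ?andbT ?andbF ?orbF //.
  rewrite ?andbT ?andbF ?orbF [0 == 1]eq_sym oner_eq0 /=; by case: (_ == 1).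
by rewrite ?andbT ?andbF ?orbF; case: (_ == 1).
Qed.


Lemma lead_scale c v : c != 0 -> lead (c *: v) = c * lead v.
Proof.
move=> hc; rewrite /lead !coordZ !mulf_eq0 (negbTE hc) /=.
by case: ifP => _ //; case: ifP => _ //; case: ifP.
Qed.

Lemma lead_neq0 v : v != 0 -> lead v != 0.
Proof.
move=> hv; apply/negP => /eqP hl; move/negP: hv; apply; apply/eqP.
rewrite [v]mkvE -mkv0; move: hl; rewrite /lead.
case: (Defs.coord 0 v =P 0) => [h0|h0 /eqP]; last by rewrite (negbTE (introN eqP h0)).
case: (Defs.coord 1 v =P 0) => [h1|h1 /eqP]; last by rewrite (negbTE (introN eqP h1)).
case: (Defs.coord 2 v =P 0) => [h2|h2 /eqP]; last by rewrite (negbTE (introN eqP h2)).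
by rewrite /= h0 h1 h2 => ->.
Qed.

Lemma ppoint_neq0 v : ppoint v -> v != 0.
Proof.
rewrite ppointE => /eqP h; apply/negP => /eqP hv; move: h.
rewrite hv /lead /Defs.coord !mxE eqxx /=; move/eqP; by rewrite eq_sym oner_eq0.
Qed.

Definition canon v := (lead v)^-1 *: v.

Lemma ppoint_canon v : v != 0 -> ppoint (canon v).
Proof.
move=> hv; rewrite ppointE /canon lead_scale ?invr_eq0 ?lead_neq0 //.
by rewrite mulVf ?lead_neq0.
Qed.

Lemma canon_uniq v w c : ppoint v -> c != 0 -> v = c *: w -> canon w = v.
Proof.
move=> hp hc e; move: hp; rewrite ppointE e lead_scale // => /eqP h.
have hl : lead w = c^-1 by apply: (mulfI hc); rewrite h mulfV.
by rewrite /canon hl invrK.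
Qed.


Definition line (o : option F) : vec F := if o is Some be then mkv 1 0 be 1 else mkv 0 0 1 0.

Lemma line_neq0 o : line o != 0.
Proof.
case: o => [be|] /=; apply/negP => /eqP; rewrite -mkv0 => /mkv_inj [h1 _ h3 _];
  [move/eqP: h1 | move/eqP: h3]; by rewrite oner_eq0.
Qed.

Lemma lL_combo (A : 'M[F]_4) x y :
  x *: (lL_a F *m A) + y *: (lL_b F *m A) = mkv x 0 y x *m A.
Proof.
rewrite !scalemxAl -mulmxDl /lL_a /lL_b !scale_mkv add_mkv; congr (mkv _ _ _ _ *m A); ring.
Qed.

Lemma Pcount_eq (p : pred (vec F)) (A : 'M[F]_4) : A \in unitmx ->
  (forall c v, c != 0 -> p (c *: v) = p v) -> (forall v, p (v *m A) = p v) ->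
  Pcount p A = #|[set o | p (line o)]|.
Proof.
move=> hU hs hA.
pose g o := canon (line o *m A).
have gnz : forall o, line o *m A != 0.
  by move=> o; apply/negP => /eqP h; move: (line_neq0 o); rewrite (unit_ker hU h) eqxx.
have ginj : injective g.
  move=> o1 o2; rewrite /g /canon => e.
  set w1 := line o1 *m A in e; set w2 := line o2 *m A in e.
  have l1 := lead_neq0 (gnz o1); have l2 := lead_neq0 (gnz o2).
  have h : (line o1 - (lead w1 / lead w2) *: line o2) *m A = 0.
    have ew : w1 = (lead w1 / lead w2) *: w2.
      by rewrite -scalerA -e scalerA mulfV // scale1r.
    by rewrite mulmxBl -scalemxAl -/w1 -/w2 {1}ew subrr.
  have := unit_ker hU h; move/eqP; rewrite subr_eq0 => /eqP.
  move: (lead w1 / lead w2) => c; clear h e l1 l2; rewrite {}/w1 {}/w2.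
  case: o1 => [b1|]; case: o2 => [b2|] /=; rewrite scale_mkv => /mkv_inj [].
  - by rewrite mulr1 => <- _; rewrite mul1r => ->.
  - by rewrite mulr0 => /eqP; rewrite oner_eq0.
  - by rewrite mulr1 => <- _; rewrite mul0r => /eqP; rewrite oner_eq0.
  - by [].
rewrite /Pcount -(card_imset _ ginj); apply: eq_card => v; rewrite inE; apply/idP/imsetP.
- case/andP => /andP [hp /existsP [x /existsP [y /eqP hv]]] hpv.
  rewrite lL_combo in hv.
  have [x0|xn0] := eqVneq x 0.
    have yn0 : y != 0.
      apply/negP => /eqP y0; move: (ppoint_neq0 hp); rewrite hv x0 y0 mkv0 mul0mx eqxx //.
    have hv' : v = y *: (line None *m A) by rewrite hv x0 scalemxAl /= scale_mkv; congr (mkv _ _ _ _ *m A); ring.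
    exists None; first by rewrite inE -hA -(hs y) // -hv'.
    by rewrite /g (canon_uniq hp yn0 hv').
  have hv' : v = x *: (line (Some (y / x)) *m A).
    by rewrite hv scalemxAl /= scale_mkv; congr (mkv _ _ _ _ *m A); field.
  exists (Some (y / x)); first by rewrite inE -hA -(hs x) // -hv'.
  by rewrite /g (canon_uniq hp xn0 hv').
- move=> [o]; rewrite inE => ho ->; rewrite /g.
  have hl := lead_neq0 (gnz o).
  rewrite ppoint_canon //= /canon hs ?invr_eq0 // hA ho andbT.
  apply/existsP; case: o ho hl => [be|] ho hl /=.
    exists (lead (line (Some be) *m A))^-1; apply/existsP; exists ((lead (line (Some be) *m A))^-1 * be).
    by rewrite lL_combo scalemxAl scale_mkv /=; apply/eqP; congr (mkv _ _ _ _ *m A); ring.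
  exists 0; apply/existsP; exists ((lead (line None *m A))^-1).
  by rewrite lL_combo scalemxAl scale_mkv /=; apply/eqP; congr (mkv _ _ _ _ *m A); ring.
Qed.


Definition fcub be t : F := t ^+ 3 - 3 * be * t ^+ 2 - 1.

Lemma two_roots_aux be r s : r != s -> fcub be r = 0 -> fcub be s = 0 ->
  r * s + r * (3 * be - r - s) + s * (3 * be - r - s) = 0 /\
  r * s * (3 * be - r - s) = 1 /\ fcub be (3 * be - r - s) = 0.
Proof.
move=> hrs hr hs; set u := 3 * be - r - s.
set al := - (r * s + r * u + s * u); set ga := r * s * u - 1.
have gen : forall t, fcub be t = (t - r) * (t - s) * (t - u) + al * t + ga.
  by move=> t; rewrite /fcub /al /ga /u; ring.
have er : al * r + ga = 0 by rewrite -hr gen; ring.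
have es : al * s + ga = 0 by rewrite -hs gen; ring.
have ha : al = 0.
  have : al * (r - s) = 0 by rewrite -[0](subrr 0) -{1}er -es; ring.
  by move/eqP; rewrite mulf_eq0 subr_eq0 (negbTE hrs) orbF => /eqP.
have hg : ga = 0 by rewrite -er ha; ring.
split; [|split]; first by apply/eqP; rewrite -oppr_eq0 -/al ha.
  - by apply/eqP; rewrite -subr_eq0 -/ga hg.
  - by rewrite gen ha hg subrr; ring.
Qed.

Lemma two_roots_fin be r s : (3 : F) != 0 ->
  r * s + r * r + s * r = 0 -> r * s * r = 1 -> 3 * be - r - s = r ->
  4 * be ^+ 3 + 1 = 0.
Proof.
move=> h3 ha hg hu.
have hr : r != 0 by apply/negP => /eqP r0; move: hg; rewrite r0 !mul0r => /eqP; rewrite eq_sym oner_eq0.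
have rE : r = - (2 * s).
  have : r * (r + 2 * s) = 0 by rewrite -ha; ring.
  move/eqP; rewrite mulf_eq0 (negbTE hr) /= addr_eq0 => /eqP //.
have bE : be = - s.
  have : 3 * (be + s) = 0 by rewrite -[RHS](subrr r) -{1}hu rE; ring.
  by move/eqP; rewrite mulf_eq0 (negbTE h3) /= addr_eq0 => /eqP.
transitivity (4 * be ^+ 3 + r * s * r); first by rewrite hg.
by rewrite bE rE; ring.
Qed.

Lemma roots2 be : (3 : F) != 0 ->
  (#|[set t : F | t ^+ 3 - 3 * be * t ^+ 2 - 1 == 0]| == 2%N) = (4 * be ^+ 3 + 1 == 0).
Proof.
move=> h3; apply/idP/idP.
- case/cards2P => r [s [hrs hS]].
  have hr : fcub be r = 0 by apply/eqP; have := setU11 r [set s]; rewrite -hS inE.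
  have hs : fcub be s = 0 by apply/eqP; have := setU1r r (set11 s); rewrite -hS inE.
  have [ha [hg hu]] := two_roots_aux hrs hr hs.
  have : 3 * be - r - s \in [set r; s] by rewrite -hS inE; move: hu; rewrite /fcub => ->.
  rewrite !inE => /orP [] /eqP hE.
    by apply/eqP; move: ha hg; rewrite hE => ha hg; apply: (two_roots_fin h3 ha hg hE).
  apply/eqP; move: ha hg; rewrite hE => ha hg; apply: (@two_roots_fin be s r h3).
  - by rewrite -ha; ring.
  - by rewrite -hg; ring.
  - by rewrite -[RHS]hE; ring.
- move=> /eqP h.
  have hb : be != 0 by apply/negP => /eqP b0; move: h; rewrite b0 expr0n /= mulr0 add0r => /eqP; rewrite oner_eq0.
  have -> : [set t : F | t ^+ 3 - 3 * be * t ^+ 2 - 1 == 0] = [set 2 * be; - be].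
    apply/setP => t; rewrite !inE.
    have -> : t ^+ 3 - 3 * be * t ^+ 2 - 1 = (t - 2 * be) ^+ 2 * (t + be).
      by transitivity ((t - 2 * be) ^+ 2 * (t + be) - (4 * be ^+ 3 + 1)); [ring | rewrite h subr0].
    by rewrite mulf_eq0 expf_eq0 /= !subr_eq0 addr_eq0.
  suff hne : 2 * be != - be by rewrite cards2 hne.
  apply/negP => /eqP e; move: hb.
  have : 3 * be = 0 by transitivity (2 * be + be); [ring | rewrite e addNr].
  by move/eqP; rewrite mulf_eq0 (negbTE h3) /= => ->.
Qed.


Lemma notC_line (be : F) : ~~ onC (mkv 1 0 be 1).
Proof.
apply/negP => /onC_elim [[t [c [hc]]]|[c [hc]]]; rewrite /Pt /Pinf scale_mkv => /mkv_inj [].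
  move=> h0 h1 _; rewrite mulr1 => c1; move: h1 h0; rewrite -c1 !mul1r => /esym /eqP.
  by rewrite expf_eq0 /= => /eqP ->; rewrite expr0n /= => /eqP; rewrite oner_eq0.
by move=> _ _ _; rewrite mulr0 => /eqP; rewrite oner_eq0.
Qed.

Lemma notC_b : ~~ onC (mkv 0 0 1 0 : vec F).
Proof.
apply/negP => /onC_elim [[t [c [hc]]]|[c [hc]]]; rewrite /Pt /Pinf scale_mkv => /mkv_inj [].
  by move=> _ _ _; rewrite mulr1 => /esym /eqP; rewrite (negbTE hc).
by move=> _ _; rewrite mulr0 => /eqP; rewrite oner_eq0.
Qed.

Lemma tan_b : on_tangent (mkv 0 0 1 0 : vec F).
Proof. by apply: (@tan_intro1 0 0 1); rewrite /Pt /Dt !scale_mkv add_mkv; congr mkv; ring. Qed.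

Lemma tan_line (be : F) : on_tangent (mkv 1 0 be 1) = (4 * be ^+ 3 + 1 == 0).
Proof.
apply/idP/idP.
- case/tan_elim => [[t [x [y]]]|[x [y]]]; rewrite /Pt /Dt /e0 /e1 !scale_mkv add_mkv => /mkv_inj [].
  + rewrite mulr1 mulr0 addr0 => e1 e2 e3 ex.
    have x1 : x = 1 by rewrite -[x]mulr1 -ex.
    rewrite x1 in e1 e2 e3.
    have ht : t != 0.
      by apply/negP => /eqP t0; move: e1; rewrite t0 !expr0n /= !mulr0 addr0 => /eqP; rewrite oner_eq0.
    have tE : t = - (2 * y).
      have : t * (t + 2 * y) = 0 by rewrite e2; ring.
      by move/eqP; rewrite mulf_eq0 (negbTE ht) /= addr_eq0 => /eqP.
    apply/eqP; transitivity (4 * be ^+ 3 + (1 * t ^+ 3 + y * (3 * t ^+ 2))); first by rewrite -e1.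
    by rewrite e3 tE; ring.
  + by rewrite !mulr0 !addr0 => _ _ _ /eqP; rewrite oner_eq0.
- move=> /eqP h; apply: (@tan_intro1 (2 * be) 1 (- be)).
  rewrite /Pt /Dt !scale_mkv add_mkv; congr mkv; try ring.
  by transitivity (1 - (4 * be ^+ 3 + 1)); [rewrite h subr0 | ring].
Qed.

Lemma nG_line (be : F) : nGamma (mkv 1 0 be 1) = #|[set t : F | t ^+ 3 - 3 * be * t ^+ 2 - 1 == 0]|.
Proof.
rewrite nGamma_E c3_mkv oner_eq0 addn0; apply: eq_card => t; rewrite !inE gam_mkv.
rewrite -oppr_eq0; apply: (congr1 (fun x : F => x == 0)); ring.
Qed.

Lemma nG_b : (3 : F) != 0 -> nGamma (mkv 0 0 1 0 : vec F) = 2%N.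
Proof.
move=> h3; rewrite nGamma_E c3_mkv eqxx addn1.
have -> : [set t | gam t (mkv 0 0 1 0) == 0] = [set 0].
  apply/setP => t; rewrite !inE gam_mkv.
  have -> : 0 - 3 * t * 0 + 3 * t ^+ 2 * 1 - t ^+ 3 * 0 = 3 * t ^+ 2 by ring.
  by rewrite mulf_eq0 (negbTE h3) expf_eq0.
by rewrite cards1.
Qed.

Lemma card_opt (P : pred (option F)) :
  #|[set o | P o]| = (P None + #|[set b | P (Some b)]|)%N.
Proof.
rewrite (cardsD1 None) inE; congr (_ + _)%N.
rewrite -(card_imset [set b | P (Some b)] (@Some_inj _)); apply: eq_card => o; rewrite !inE.
apply/andP/imsetP => [[ho hp]|[b]].
  by case: o ho hp => [b|] // _ hp; exists b; rewrite ?inE.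
by rewrite inE => hp ->.
Qed.

End S.

Theorem lemma4p3 (F : finFieldType) :
  (5 <= #|F|)%N -> (#|F| %% 3 != 0)%N ->
  forall A : 'M[F]_4, inGq A ->
    Pcount (@Tpoint F) A = (Vm F 2 + 1)%N /\ Pcount (@OneGammaPoint F) A = Vm F 1.
Proof.
move=> hF h3' A hA; have h3 := three_neq0 h3'.
have hG := inGq_Good hF hA.
have hU : A \in unitmx by case/andP: hA.
split.
- rewrite (@Pcount_eq _ (@Tpoint F)) //; first last.
  + by move=> v; rewrite /Tpoint; case: (hG v) => -> -> _.
  + by move=> c v hc; rewrite /Tpoint onC_scale // tan_scale.
  rewrite card_opt /= /Tpoint notC_b tan_b addnC; congr (_ + _)%N.
  apply: eq_card => b; rewrite !inE notC_line tan_line /= roots2 //.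
- rewrite (@Pcount_eq _ (@OneGammaPoint F)) //; first last.
  + by move=> v; rewrite /OneGammaPoint; case: (hG v) => -> _ ->.
  + by move=> c v hc; rewrite /OneGammaPoint onC_scale // nGamma_scale.
  rewrite card_opt /= /OneGammaPoint notC_b nG_b //= add0n.
  by apply: eq_card => b; rewrite !inE notC_line nG_line.
Qed.
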